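(* For weights $\boldsymbol\sigma,\boldsymbol\sigma'$ and $a\in\mathbb C$ (generic, so that the entries below are defined), define the $N\times N$ matrix $$F_{lj}(\boldsymbol\sigma',a,\boldsymbol\sigma)=\prod_{k\ne l}\frac{\sin\pi\left((a+1)/N+\sigma'^{(j)}-\sigma^{(k)}\right)}{\sin\pi\left(\sigma^{(k)}-\sigma^{(l)}\right)}.$$ Then for $m=1,\dots,N$, $$F(\boldsymbol\sigma',a,\boldsymbol\sigma\pm\boldsymbol h_m)=D_m^{N-1}F(\boldsymbol\sigma',a\pm1,\boldsymbol\sigma),\qquad F(\boldsymbol\sigma'\pm\boldsymbol h_m,a,\boldsymbol\sigma)=F(\boldsymbol\sigma',a\mp1,\boldsymbol\sigma)D_m^{N-1},$$ and consequently, for $m,s=1,\dots,N$, $$F(\boldsymbol\sigma',a,\boldsymbol\sigma+\boldsymbol h_m-\boldsymbol h_s)=D_m^{N-1}D_s^{N-1}F(\boldsymbol\sigma',a,\boldsymbol\sigma),\qquad F(\boldsymbol\sigma'+\boldsymbol h_m-\boldsymbol h_s,a,\boldsymbol\sigma)=F(\boldsymbol\sigma',a,\boldsymbol\sigma)D_m^{N-1}D_s^{N-1}.$$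
   Context: Weights are vectors $\boldsymbol\sigma=(\sigma^{(1)},\dots,\sigma^{(N)})\in\mathbb C^N$ with zero component sum. $\boldsymbol h_m\in\mathbb C^N$ has components $h_m^{(k)}=\delta_{mk}-1/N$. $D_m$ is the diagonal matrix with $(D_m)_{kj}=(-1)^{\delta_{km}}\delta_{kj}$. *)

(* Defs.v *)
From HB Require Import structures.
From mathcomp Require Import all_boot all_order all_algebra.
From mathcomp Require Import all_classical all_reals all_analysis.
From mathcomp Require Import complex.
Set Implicit Arguments. Unset Strict Implicit. Unset Printing Implicit Defensive.
Import Order.TTheory GRing.Theory Num.Theory.
Local Open Scope ring_scope.
Local Open Scope complex_scope.

(* Complex sine: sin(x + i y) = sin x cosh y + i cos x sinh y. *)
Definition sinC (R : realType) (z : R[i]) : R[i] :=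
  let: Complex x y := z in
  (sin x * ((expR y + expR (- y)) / 2)) +i* (cos x * ((expR y - expR (- y)) / 2)).

Definition is_weight (R : realType) (N : nat) (s : 'I_N -> R[i]) : Prop :=
  \sum_(k < N) s k = 0.

Definition hvec (R : realType) (N : nat) (m : 'I_N) : 'I_N -> R[i] :=
  fun k => (k == m)%:R - (N%:R)^-1.

Definition wadd (R : realType) (N : nat) (s t : 'I_N -> R[i]) : 'I_N -> R[i] :=
  fun k => s k + t k.
Definition wsub (R : realType) (N : nat) (s t : 'I_N -> R[i]) : 'I_N -> R[i] :=
  fun k => s k - t k.

Definition Dmat (R : realType) (N : nat) (m : 'I_N) : 'M[R[i]]_N :=
  \matrix_(k, j) ((-1) ^+ (k == m) * (k == j)%:R).

Definition Fmat (R : realType) (N : nat) (s' : 'I_N -> R[i]) (a : R[i])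
    (s : 'I_N -> R[i]) : 'M[R[i]]_N :=
  \matrix_(l, j) \prod_(k < N | k != l)
     (sinC ((pi : R)%:C * ((a + 1) / N%:R + s' j - s k))
      / sinC ((pi : R)%:C * (s k - s l))).

Arguments Dmat {R N} m.
Arguments hvec {R N} m.

(* Main.v *)
Set Warnings "-all".
Require Import Defs.
From HB Require Import structures.
From mathcomp Require Import all_boot all_order all_algebra.
From mathcomp Require Import all_classical all_reals all_analysis.
From mathcomp Require Import complex.
From mathcomp Require Import ring.
Import Order.TTheory GRing.Theory Num.Theory.
Local Open Scope ring_scope.
Local Open Scope complex_scope.

Lemma sinC_shift (R : realType) (w : R[i]) :
  sinC ((pi : R)%:C * (w + 1)) = - sinC ((pi : R)%:C * w).
Proof.
case: w => x y.
have -> : (pi : R)%:C * (x +i* y + 1) = (pi * x + pi) +i* (pi * y).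
  by apply/eqP; rewrite eq_complex /=; apply/andP; split; apply/eqP; ring.
have -> : (pi : R)%:C * (x +i* y) = (pi * x) +i* (pi * y).
  by apply/eqP; rewrite eq_complex /=; apply/andP; split; apply/eqP; ring.
rewrite /sinC sinDpi cosDpi.
by apply/eqP; rewrite eq_complex /=; apply/andP; split; apply/eqP; ring.
Qed.

Lemma sinC_shiftN (R : realType) (w : R[i]) :
  sinC ((pi : R)%:C * (w - 1)) = - sinC ((pi : R)%:C * w).
Proof. by rewrite -{2}(subrK 1 w) sinC_shift opprK. Qed.

Lemma Dpow (R : realType) N (m : 'I_N) n :
  Dmat m ^+ n = diag_mx (\row_k (if k == m then (-1) ^+ n else 1 : R[i])).
Proof.
elim: n => [|n IH].
  apply/matrixP => i j; rewrite !mxE; by case: (i == m).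
rewrite exprS IH -mulmxE mul_mx_diag; apply/matrixP => i j; rewrite !mxE.
case: (eqVneq i j) => [<-|hij]; last by rewrite mulr0 mulr0n mul0r.
case: (i == m) => /=; rewrite ?mulr1n ?mulr1 ?exprS ?expr0 ?expr1 ?mul1r ?mulr1 //.
Qed.

Lemma L1 (R : realType) (N : nat) (s' s : 'I_N -> R[i]) (a : R[i]) m :
  Fmat s' a (wadd s (hvec m)) = Dmat m ^+ N.-1 *m Fmat s' (a + 1) s.
Proof.
rewrite Dpow mul_diag_mx; apply/matrixP => l j; rewrite !mxE.
case: (eqVneq l m) => [->|hlm].
  have -> : N.-1 = #|predC1 m| by rewrite cardC1 card_ord.
  rewrite -prodrN.
  apply: eq_bigr => k hk; rewrite /wadd /hvec (negbTE hk) eqxx.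
  have -> : (a + 1) / N%:R + s' j - (s k + (0%:R - N%:R^-1)) = (a + 1 + 1) / N%:R + s' j - s k by ring.
  have -> : s k + (0%:R - N%:R^-1) - (s m + (1%:R - N%:R^-1)) = (s k - s m) - 1 by ring.
  by rewrite sinC_shiftN invrN mulrN.
rewrite mul1r; apply: eq_bigr => k hk; rewrite /wadd /hvec (negbTE hlm).
case: (eqVneq k m) => [->|hkm].
  have -> : (a + 1) / N%:R + s' j - (s m + (1%:R - N%:R^-1)) = ((a + 1 + 1) / N%:R + s' j - s m) - 1 by ring.
  have -> : s m + (1%:R - N%:R^-1) - (s l + (0%:R - N%:R^-1)) = (s m - s l) + 1 by ring.
  by rewrite sinC_shiftN sinC_shift invrN mulrN mulNr opprK.
have -> : (a + 1) / N%:R + s' j - (s k + (0%:R - N%:R^-1)) = (a + 1 + 1) / N%:R + s' j - s k by ring.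
by have -> : s k + (0%:R - N%:R^-1) - (s l + (0%:R - N%:R^-1)) = (s k - s l) by ring.
Qed.

Lemma L2 (R : realType) (N : nat) (s' s : 'I_N -> R[i]) (a : R[i]) m :
  Fmat s' a (wsub s (hvec m)) = Dmat m ^+ N.-1 *m Fmat s' (a - 1) s.
Proof.
rewrite Dpow mul_diag_mx; apply/matrixP => l j; rewrite !mxE.
case: (eqVneq l m) => [->|hlm].
  have -> : N.-1 = #|predC1 m| by rewrite cardC1 card_ord.
  rewrite -prodrN.
  apply: eq_bigr => k hk; rewrite /wsub /hvec (negbTE hk) eqxx.
  have -> : (a + 1) / N%:R + s' j - (s k - (0%:R - N%:R^-1)) = (a - 1 + 1) / N%:R + s' j - s k by ring.
  have -> : s k - (0%:R - N%:R^-1) - (s m - (1%:R - N%:R^-1)) = (s k - s m) + 1 by ring.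
  by rewrite sinC_shift invrN mulrN.
rewrite mul1r; apply: eq_bigr => k hk; rewrite /wsub /hvec (negbTE hlm).
case: (eqVneq k m) => [->|hkm].
  have -> : (a + 1) / N%:R + s' j - (s m - (1%:R - N%:R^-1)) = ((a - 1 + 1) / N%:R + s' j - s m) + 1 by ring.
  have -> : s m - (1%:R - N%:R^-1) - (s l - (0%:R - N%:R^-1)) = (s m - s l) - 1 by ring.
  by rewrite sinC_shiftN sinC_shift invrN mulrN mulNr opprK.
have -> : (a + 1) / N%:R + s' j - (s k - (0%:R - N%:R^-1)) = (a - 1 + 1) / N%:R + s' j - s k by ring.
by have -> : s k - (0%:R - N%:R^-1) - (s l - (0%:R - N%:R^-1)) = (s k - s l) by ring.
Qed.

Lemma L3 (R : realType) (N : nat) (s' s : 'I_N -> R[i]) (a : R[i]) m :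
  Fmat (wadd s' (hvec m)) a s = Fmat s' (a - 1) s *m Dmat m ^+ N.-1.
Proof.
rewrite Dpow mul_mx_diag; apply/matrixP => l j; rewrite !mxE.
case: (eqVneq j m) => [->|hjm].
  have -> : N.-1 = #|predC1 l| by rewrite cardC1 card_ord.
  rewrite [RHS]mulrC -prodrN.
  apply: eq_bigr => k hk; rewrite /wadd /hvec eqxx.
  have -> : (a + 1) / N%:R + (s' m + (1%:R - N%:R^-1)) - s k = ((a - 1 + 1) / N%:R + s' m - s k) + 1 by ring.
  by rewrite sinC_shift mulNr.
rewrite mulr1; apply: eq_bigr => k hk; rewrite /wadd /hvec (negbTE hjm).
by have -> : (a + 1) / N%:R + (s' j + (0%:R - N%:R^-1)) - s k = (a - 1 + 1) / N%:R + s' j - s k by ring.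
Qed.

Lemma L4 (R : realType) (N : nat) (s' s : 'I_N -> R[i]) (a : R[i]) m :
  Fmat (wsub s' (hvec m)) a s = Fmat s' (a + 1) s *m Dmat m ^+ N.-1.
Proof.
rewrite Dpow mul_mx_diag; apply/matrixP => l j; rewrite !mxE.
case: (eqVneq j m) => [->|hjm].
  have -> : N.-1 = #|predC1 l| by rewrite cardC1 card_ord.
  rewrite [RHS]mulrC -prodrN.
  apply: eq_bigr => k hk; rewrite /wsub /hvec eqxx.
  have -> : (a + 1) / N%:R + (s' m - (1%:R - N%:R^-1)) - s k = ((a + 1 + 1) / N%:R + s' m - s k) - 1 by ring.
  by rewrite sinC_shiftN mulNr.
rewrite mulr1; apply: eq_bigr => k hk; rewrite /wsub /hvec (negbTE hjm).
by have -> : (a + 1) / N%:R + (s' j - (0%:R - N%:R^-1)) - s k = (a + 1 + 1) / N%:R + s' j - s k by ring.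
Qed.

Lemma Dcomm (R : realType) N (m t : 'I_N) n :
  Dmat m ^+ n *m Dmat t ^+ n = Dmat t ^+ n *m (Dmat m ^+ n : 'M[R[i]]_N).
Proof.
rewrite !Dpow !mul_diag_mx; apply/matrixP => i j; rewrite !mxE.
by rewrite !mulrnAr mulrC.
Qed.

Theorem proposition4p2 (R : realType) (N : nat) (s' s : 'I_N -> R[i]) (a : R[i]) :
  is_weight s' -> is_weight s ->
  (forall k l : 'I_N, k != l -> sinC ((pi : R)%:C * (s k - s l)) != 0) ->
  (forall m : 'I_N,
      Fmat s' a (wadd s (hvec m)) = Dmat m ^+ N.-1 *m Fmat s' (a + 1) s /\
      Fmat s' a (wsub s (hvec m)) = Dmat m ^+ N.-1 *m Fmat s' (a - 1) s /\
      Fmat (wadd s' (hvec m)) a s = Fmat s' (a - 1) s *m Dmat m ^+ N.-1 /\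
      Fmat (wsub s' (hvec m)) a s = Fmat s' (a + 1) s *m Dmat m ^+ N.-1) /\
  (forall m t : 'I_N,
      Fmat s' a (wsub (wadd s (hvec m)) (hvec t))
        = Dmat m ^+ N.-1 *m Dmat t ^+ N.-1 *m Fmat s' a s /\
      Fmat (wsub (wadd s' (hvec m)) (hvec t)) a s
        = Fmat s' a s *m Dmat m ^+ N.-1 *m Dmat t ^+ N.-1).
Proof.
move=> _ _ _; split=> [m|m t]; first by rewrite L1 L2 L3 L4.
rewrite L2 L1 subrK mulmxA Dcomm L4 L3 addrK; split=> //.
Qed.
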